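(* For every $n \ge 1$, $$ f^+_n(x) = \big(2(n-1)x - 1\big) f^+_{n-1}(x) + 2x(1-x) \frac{d f^+_{n-1}}{dx}(x) + 2(n-1)x\, f^+_{n-2}(x) + d^B_{n-1}(x), $$ with the convention $f^+_{-1}(x) = 0$.
   Context: A signed permutation of $[n]$ is a set $S = \{a_1, \dots, a_n\}$ with $a_i \in \{i, -i\}$, together with a bijection $w : S \to S$. - $a \in S$ is a $B$-excedance if $w(a) > a$, or if $a < 0$ and $w(a) = a$. - $w$ is a derangement if no $a \in S$ with $a > 0$ has $w(a) = a$. - $d^B_n(x) = \sum_{w \text{ derangement}} x^{\mathrm{exc}_B(w)}$, where $\mathrm{exc}_B(w)$ is the number of $B$-excedances, and $d^B_0 = 1$. - $f^+_n, f^-_n$ are the unique real polynomials with $d^B_n = f^+_n + f^-_n$, $f^+_n(x) = x^n f^+_n(1/x)$ and $f^-_n(x) = x^{n+1} f^-_n(1/x)$. *)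

(* Defs.v *)
From HB Require Import structures.
From mathcomp Require Import all_boot all_order all_algebra all_fingroup.
Set Implicit Arguments. Unset Strict Implicit. Unset Printing Implicit Defensive.
Import Order.TTheory GRing.Theory Num.Theory.
Local Open Scope ring_scope.

(* A signed permutation of [n]: the sign choice s (s i = true iff a_{i+1} = -(i+1))
   together with the bijection w : S -> S, encoded by sigma : w(a_i) = a_{sigma i}. *)
Definition signed_perm (n : nat) := ({ffun 'I_n -> bool} * {perm 'I_n})%type.

Definition sval n (s : {ffun 'I_n -> bool}) (i : 'I_n) : int :=
  if s i then - ((i.+1)%:Z) else (i.+1)%:Z.

Definition is_excB n (w : signed_perm n) (i : 'I_n) : bool :=
  (sval w.1 i < sval w.1 (w.2 i)) || ((sval w.1 i < 0) && (w.2 i == i)).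

Definition excB n (w : signed_perm n) : nat := #|[pred i | is_excB w i]|.

Definition derangementB n (w : signed_perm n) : bool :=
  [forall i, (0 < sval w.1 i) ==> (w.2 i != i)].

(* d^B_n(x) as a polynomial over R (d^B_0 = 1 automatically) *)
Definition dB (R : nzRingType) (n : nat) : {poly R} :=
  \sum_(w : signed_perm n | derangementB w) 'X^(excB w).

Definition palindromic (R : realFieldType) (k : nat) (p : {poly R}) : Prop :=
  forall x : R, x != 0 -> p.[x] = x ^+ k * p.[x^-1].

(* Main.v *)
Require Import Defs.
From HB Require Import structures.
From mathcomp Require Import all_boot all_order all_algebra all_fingroup.
From mathcomp Require Import zify ring.
Import Order.TTheory GRing.Theory Num.Theory.
Local Open Scope ring_scope.

Set Implicit Arguments. Unset Strict Implicit. Unset Printing Implicit Defensive.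
Notation sv := Defs.sval.

Section Sums.
Variable (M : nmodType).

Lemma sum_perm_fix n (i j : 'I_n.+1) (F : {perm 'I_n.+1} -> M) :
  \sum_(s : {perm 'I_n.+1} | s i == j) F s = \sum_(s : {perm 'I_n}) F (lift_perm i j s).
Proof.
rewrite (reindex (lift_perm i j)); last first.
  pose ulsf i (s : {perm 'I_n.+1}) k := odflt k (unlift (s i) (s (lift i k))).
  have ulsfK i' (s : {perm 'I_n.+1}) k: lift (s i') (ulsf i' s k) = s (lift i' k).
    rewrite /ulsf; have:= neq_lift i' k.
    by rewrite -(can_eq (permK s)) => /unlift_some[] ? ? ->.
  have inj_ulsf: injective (ulsf i _).
    move=> s; apply: can_inj (ulsf (s i) s^-1%g) _ => k'.
    by rewrite {1}/ulsf ulsfK !permK liftK.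
  exists (fun s => perm (inj_ulsf s)) => [s _ | s].
    by apply/permP=> k'; rewrite permE /ulsf lift_perm_lift lift_perm_id liftK.
  move/(s _ =P _) => si0; apply/permP=> k.
  case: (unliftP i k) => [k'|] ->; rewrite ?lift_perm_id //.
  by rewrite lift_perm_lift -si0 permE ulsfK.
by apply: eq_bigl => s; rewrite lift_perm_id eqxx.
Qed.

Definition extS n (i : 'I_n.+1) (b : bool) (s : {ffun 'I_n -> bool}) : {ffun 'I_n.+1 -> bool} :=
  [ffun k => if unlift i k is Some j then s j else b].

Lemma extS_id n i b s : @extS n i b s i = b.
Proof. by rewrite ffunE unlift_none. Qed.
Lemma extS_lift n i b s k : @extS n i b s (lift i k) = s k.
Proof. by rewrite ffunE liftK. Qed.

Lemma sum_ffun_fix n (i : 'I_n.+1) b (F : {ffun 'I_n.+1 -> bool} -> M) :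
  \sum_(s : {ffun 'I_n.+1 -> bool} | s i == b) F s = \sum_(s : {ffun 'I_n -> bool}) F (extS i b s).
Proof.
rewrite (reindex (extS i b)); last first.
  exists (fun s : {ffun 'I_n.+1 -> bool} => [ffun k => s (lift i k)]) => [s _ | s].
    by apply/ffunP => k; rewrite ffunE extS_lift.
  move/eqP => si; apply/ffunP => k; rewrite ffunE.
  by case: (unliftP i k) => [k'|] ->; rewrite ?ffunE.
by apply: eq_bigl => s; rewrite extS_id eqxx.
Qed.

End Sums.


Lemma lift_ltn n (i : 'I_n.+1) x y : (lift i x < lift i y)%N = (x < y)%N.
Proof. rewrite /= /bump; case: leqP; case: leqP; lia. Qed.

Lemma sval_neg n (s : {ffun 'I_n -> bool}) x : (sv s x < 0) = s x.
Proof. by rewrite /sv /Defs.sval; case: (s x); rewrite ?oppr_lt0 ?ltz_nat. Qed.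

Lemma sval_lt n (s : {ffun 'I_n -> bool}) x y :
  (sv s x < sv s y) = if s x then (s y ==> (y < x)%N) else (~~ s y && (x < y)%N).
Proof.
rewrite /sv /Defs.sval; case: (s x); case: (s y) => /=.
- by rewrite ltrN2 ltz_nat ltnS.
- by apply: (@lt_le_trans _ _ 0); rewrite ?oppr_lt0 ?ltz_nat.
- by apply/negbTE; rewrite -leNgt; apply: (@le_trans _ _ 0); rewrite ?oppr_le0 ?lez_nat.
- by rewrite ltz_nat ltnS.
Qed.

Lemma sval_lift_lt n (i : 'I_n.+1) b s x y :
  (sv (extS i b s) (lift i x) < sv (extS i b s) (lift i y)) = (sv s x < sv s y).
Proof. by rewrite !sval_lt !extS_lift !lift_ltn. Qed.

Lemma forall_lift n (j : 'I_n.+1) (P : pred 'I_n.+1) :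
  [forall i, P i] = P j && [forall k, P (lift j k)].
Proof.
apply/forallP/andP => [H|[Hj /forallP H] i]; first by split => //; apply/forallP.
by case: (unliftP j i) => [k|] ->.
Qed.

Lemma excE n (w : signed_perm n) : excB w = (\sum_i (is_excB w i : nat))%N.
Proof. by rewrite /excB -sum1_card big_mkcond /=; apply: eq_bigr => i _; rewrite inE; case: is_excB. Qed.

Lemma exc_lift n (i : 'I_n.+1) b s (sg : {perm 'I_n}) k :
  is_excB (extS i b s, lift_perm i i sg) (lift i k) = is_excB (s, sg) k.
Proof.
by rewrite /is_excB /= lift_perm_lift sval_lift_lt !sval_neg !extS_lift (inj_eq lift_inj).
Qed.


Lemma sval_pos n (s : {ffun 'I_n -> bool}) x : (0 < sv s x) = ~~ s x.
Proof. by rewrite /sv /Defs.sval; case: (s x); rewrite ?oppr_gt0 ?ltz_nat. Qed.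

Lemma der_lift n (i : 'I_n.+1) b s (sg : {perm 'I_n}) k :
  ((0 < sv (extS i b s) (lift i k)) ==> (lift_perm i i sg (lift i k) != lift i k))
  = ((0 < sv s k) ==> (sg k != k)).
Proof. by rewrite !sval_pos extS_lift lift_perm_lift (inj_eq lift_inj). Qed.

Section Max.
Variables (n : nat) (b : bool) (s : {ffun 'I_n -> bool}) (sg : {perm 'I_n}).
Let m := @ord_max n.
Let s' := extS m b s.
Let P := lift_perm m m sg.

Lemma lt_max x : (sv s' (lift m x) < sv s' m) = ~~ b.
Proof.
rewrite sval_lt !extS_lift /s' extS_id lift_max /=.
have := ltn_ord x; case: (s x); case: b => //= h; lia.
Qed.

Lemma max_lt y : (sv s' m < sv s' (lift m y)) = b.
Proof.
rewrite sval_lt !extS_lift /s' extS_id lift_max /=.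
have := ltn_ord y; case: (s y); case: b => //= h; lia.
Qed.

Lemma exc_max0 : excB (s', P) = (excB (s, sg) + b)%N.
Proof.
rewrite !excE (bigD1_ord m) //= addnC; congr addn.
  by apply: eq_bigr => k _; rewrite exc_lift.
by rewrite /is_excB /= /P lift_perm_id ltxx /= sval_neg /s' extS_id eqxx andbT.
Qed.

Lemma der_max0 : derangementB (s', P) = derangementB (s, sg) && b.
Proof.
rewrite /derangementB (forall_lift m) andbC /=; congr andb.
  by apply: eq_forallb => k; rewrite der_lift.
by rewrite /P lift_perm_id eqxx implybF sval_pos /s' extS_id negbK.
Qed.

Section A0.
Variable a0 : 'I_n.
Let a := lift m a0.
Let Q := (tperm a m * P)%g.

Lemma Q_m : Q m = lift m (sg a0).
Proof. by rewrite /Q permM tpermR /P lift_perm_lift. Qed.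
Lemma Q_a : Q a = m.
Proof. by rewrite /Q permM tpermL /P lift_perm_id. Qed.
Lemma Q_k k : k != a0 -> Q (lift m k) = lift m (sg k).
Proof.
move=> hk; have h1 : a != lift m k by rewrite /a (inj_eq lift_inj) eq_sym.
by rewrite /Q permM tpermD ?neq_lift // /P lift_perm_lift.
Qed.

Lemma exc_max1 : (excB (s', Q) + is_excB (s, sg) a0 = (excB (s, sg)).+1)%N.
Proof.
rewrite !excE (bigD1_ord m) //= (bigD1_ord a0) //= (bigD1_ord a0 (P := predT)) //=.
have -> : \sum_(i < n.-1) (is_excB (s', Q) (lift m (lift a0 i)) : nat)
     = \sum_(i < n.-1) (is_excB (s, sg) (lift a0 i) : nat).
  apply: eq_bigr => k _.
  rewrite /is_excB /= Q_k; last by rewrite eq_sym neq_lift.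
  by rewrite sval_lift_lt !sval_neg /s' !extS_lift (inj_eq lift_inj).
have e1 : is_excB (s', Q) m = b.
  rewrite /is_excB /= Q_m max_lt sval_neg /s' extS_id.
  by rewrite ?lift_eqF ?(negbTE (neq_lift _ _)) andbF orbF.
have e2 : is_excB (s', Q) (lift m a0) = ~~ b.
  by rewrite /is_excB /= -/a Q_a lt_max ?lift_eqF ?(negbTE (neq_lift _ _)) andbF orbF.
rewrite e1 e2; case: b; case: is_excB => /=; rewrite ?add0n ?addn0 ?add1n ?addn1 ?addSn ?addnS //.
Qed.

Lemma der_max1 : derangementB (s', Q) =
  [forall k, (k != a0) ==> ((0 < sv s k) ==> (sg k != k))].
Proof.
rewrite /derangementB (forall_lift m) /= Q_m lift_eqF implybT /=.
apply: eq_forallb => k; case: (eqVneq k a0) => [->|hk] /=.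
  by rewrite -/a Q_a /a neq_lift implybT.
rewrite Q_k //.
by rewrite !sval_pos /s' extS_lift (inj_eq lift_inj).
Qed.
End A0.
End Max.


Lemma sum_perm_split (M : nmodType) n (F : {perm 'I_n.+1} -> M) :
  \sum_(s : {perm 'I_n.+1}) F s =
  \sum_(a : 'I_n.+1) \sum_(s : {perm 'I_n}) F (tperm a ord_max * lift_perm ord_max ord_max s)%g.
Proof.
rewrite (partition_big (fun s : {perm 'I_n.+1} => s^-1 ord_max)%g xpredT) //=.
apply: eq_bigr => a _.
rewrite (reindex_inj (mulgI (tperm a ord_max))) /=.
rewrite -(sum_perm_fix ord_max ord_max (fun s => F (tperm a ord_max * s)%g)).
apply: eq_bigl => s.
rewrite invMg tpermV permM (can2_eq (tpermK _ _) (tpermK _ _)) tpermL.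
by rewrite (canF_eq (permKV s)) eq_sym.
Qed.

Lemma sum_ffun_split (M : nmodType) n (F : {ffun 'I_n.+1 -> bool} -> M) :
  \sum_(s : {ffun 'I_n.+1 -> bool}) F s =
  \sum_(b : bool) \sum_(s : {ffun 'I_n -> bool}) F (extS ord_max b s).
Proof.
rewrite (partition_big (fun s : {ffun 'I_n.+1 -> bool} => s ord_max) xpredT) //=.
by apply: eq_bigr => b _; rewrite -sum_ffun_fix.
Qed.


Section Rec.
Variable R : comNzRingType.

Definition Aw n (w : signed_perm n) : {poly R} :=
  if derangementB w then 'X^(excB w) else 0.

Lemma dB_sum n : dB R n = \sum_(s : {ffun 'I_n -> bool}) \sum_(sg : {perm 'I_n}) Aw (s, sg).
Proof.
rewrite /dB big_mkcond /= pair_bigA /=.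
by apply: eq_bigr => -[s sg] _.
Qed.

Lemma C_split n (s : {ffun 'I_n -> bool}) (sg : {perm 'I_n}) a0 :
  [forall k, (k != a0) ==> ((0 < sv s k) ==> (sg k != k))] =
  derangementB (s, sg) || [&& ~~ s a0, sg a0 == a0 &
        [forall k, (k != a0) ==> ((0 < sv s k) ==> (sg k != k))]].
Proof.
case: (boolP (derangementB (s, sg))) => D /=.
  by apply/forallP => k; apply/implyP => _; exact: (forallP D k).
apply/idP/idP; last by case/and3P.
move=> HC; rewrite HC andbT; apply: contraNT D => H; apply/forallP => k /=.
case: (eqVneq k a0) => [->|hk] /=.
  by rewrite sval_pos; apply/implyP => hs; apply: contra H => ->; rewrite hs.
exact: (implyP (forallP HC k) hk).
Qed.

Lemma der_not3 n (s : {ffun 'I_n -> bool}) (sg : {perm 'I_n}) a0 :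
  derangementB (s, sg) -> ~~ (~~ s a0 && (sg a0 == a0)).
Proof.
move=> /forallP /(_ a0) /=; rewrite sval_pos.
by case: (s a0) => //= /negbTE ->.
Qed.

Lemma e3 n (s : {ffun 'I_n -> bool}) (sg : {perm 'I_n}) a0 :
  ~~ s a0 -> sg a0 == a0 -> is_excB (s, sg) a0 = false.
Proof.
move=> hs /eqP h; rewrite /is_excB /= h ltxx /= sval_neg.
by rewrite (negbTE hs).
Qed.

Definition Ew n (w : signed_perm n) (a0 : 'I_n) : {poly R} :=
  if is_excB w a0 then 'X^(excB w) else 'X^((excB w).+1).

Definition Cw n (w : signed_perm n) (a0 : 'I_n) :=
  [forall k, (k != a0) ==> ((0 < sv w.1 k) ==> (w.2 k != k))].

Lemma term_max n s (sg : {perm 'I_n}) b :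
  Aw (extS ord_max b s, lift_perm ord_max ord_max sg) = if b then 'X * Aw (s, sg) else 0.
Proof.
rewrite /Aw der_max0 exc_max0; case: b; case: derangementB => //=.
  by rewrite ?mulr0 // addn1 exprS.
by rewrite mulr0.
Qed.

Lemma term_a0 n s (sg : {perm 'I_n}) b a0 :
  Aw (extS ord_max b s, tperm (lift ord_max a0) ord_max * lift_perm ord_max ord_max sg)%g
  = if Cw (s, sg) a0 then Ew (s, sg) a0 else 0.
Proof.
rewrite /Aw der_max1 /Cw /Ew /=; case: ifP => // _.
have := exc_max1 b s sg a0; set e := excB (s, sg); set f := excB _.
by case: is_excB => /= h; congr (GRing.exp _ _); lia.
Qed.

Definition Tw n (w : signed_perm n) (a0 : 'I_n) : {poly R} :=
  if [&& ~~ w.1 a0, w.2 a0 == a0 & Cw w a0] then 'X^((excB w).+1) else 0.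

Lemma C_term n (s : {ffun 'I_n -> bool}) (sg : {perm 'I_n}) a0 :
  (if Cw (s, sg) a0 then Ew (s, sg) a0 else 0) =
  (if derangementB (s, sg) then Ew (s, sg) a0 else 0) + Tw (s, sg) a0.
Proof.
rewrite /Tw /= {1}/Cw /= C_split -/(Cw (s, sg) a0).
case: (boolP (derangementB (s, sg))) => D /=.
  by move: (der_not3 a0 D); case: (s a0); case: (sg a0 == a0); rewrite /= ?andbF ?addr0.
rewrite add0r; case: (boolP (~~ s a0)) => //= hs; case: (boolP (sg a0 == a0)) => //= hf.
by case: (Cw _ _) => //; rewrite /Ew e3.
Qed.

Lemma inner n (s : {ffun 'I_n -> bool}) (sg : {perm 'I_n}) :
  \sum_(b : bool) \sum_(a : 'I_n.+1)
     Aw (extS ord_max b s, tperm a ord_max * lift_perm ord_max ord_max sg)%g =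
  'X * Aw (s, sg) + (\sum_(a0 : 'I_n) (if derangementB (s, sg) then Ew (s, sg) a0 else 0)
                   + \sum_(a0 : 'I_n) Tw (s, sg) a0) *+ 2.
Proof.
have H b : \sum_(a : 'I_n.+1)
     Aw (extS ord_max b s, tperm a ord_max * lift_perm ord_max ord_max sg)%g =
   (if b then 'X * Aw (s, sg) else 0) +
   (\sum_(a0 : 'I_n) (if derangementB (s, sg) then Ew (s, sg) a0 else 0)
                   + \sum_(a0 : 'I_n) Tw (s, sg) a0).
  rewrite (bigD1_ord ord_max) //= tperm1 mul1g term_max; congr (_ + _).
  by rewrite -big_split /=; apply: eq_bigr => a0 _; rewrite term_a0 C_term.
by rewrite big_bool /= !H /= add0r mulr2n [in RHS]addrA.
Qed.

Lemma Esum n (w : signed_perm n) :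
  \sum_(a0 : 'I_n) Ew w a0 =
  (n%:R *: 'X) * 'X^(excB w) + 'X * (1 - 'X) * ('X^(excB w))^`().
Proof.
have -> : \sum_(a0 : 'I_n) Ew w a0 = \sum_(a0 : 'I_n)
   ('X^((excB w).+1) + ('X^(excB w) - 'X^((excB w).+1)) *+ is_excB w a0).
  apply: eq_bigr => a0 _; rewrite /Ew; case: is_excB => /=.
    by rewrite mulr1n addrC subrK.
  by rewrite mulr0n addr0.
rewrite big_split /= sumr_const card_ord sumrMnr -excE derivXn.
rewrite -mul_polyC polyC_natr.
case: (excB w) => [|k] /=; rewrite ?exprS; ring.
Qed.

Lemma Msum n :
  \sum_(s : {ffun 'I_n -> bool}) \sum_(sg : {perm 'I_n}) \sum_(a0 : 'I_n)
     (if derangementB (s, sg) then Ew (s, sg) a0 else 0) =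
  (n%:R *: 'X) * dB R n + 'X * (1 - 'X) * (dB R n)^`().
Proof.
rewrite dB_sum mulr_sumr raddf_sum mulr_sumr -big_split; apply: eq_bigr => s _.
rewrite mulr_sumr raddf_sum mulr_sumr -big_split; apply: eq_bigr => sg _.
rewrite /Aw; case: ifP => _; first by rewrite Esum.
rewrite big1 // /= mulr0 ?deriv0 ?raddf0 mulr0 addr0 //. 
Qed.

Lemma C_lift n (a0 : 'I_n.+1) s0 (sg0 : {perm 'I_n}) :
  Cw (extS a0 false s0, lift_perm a0 a0 sg0) a0 = derangementB (s0, sg0).
Proof.
rewrite /Cw /= (forall_lift a0) eqxx /=; apply: eq_forallb => k.
by rewrite lift_eqF /= der_lift.
Qed.

Lemma exc_lift_all n (a0 : 'I_n.+1) s0 (sg0 : {perm 'I_n}) :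
  excB (extS a0 false s0, lift_perm a0 a0 sg0) = excB (s0, sg0).
Proof.
rewrite !excE (bigD1_ord a0) //=.
rewrite {1}/is_excB /= lift_perm_id ltxx sval_neg extS_id /= add0n.
by apply: eq_bigr => k _; rewrite exc_lift.
Qed.

Lemma Tsum n :
  \sum_(s : {ffun 'I_n -> bool}) \sum_(sg : {perm 'I_n}) \sum_(a0 : 'I_n) Tw (s, sg) a0 =
  (n%:R *: 'X) * (if n is m.+1 then dB R m else 0).
Proof.
case: n => [|n].
  rewrite mulr0 big1 // => s _; rewrite big1 // => sg _; exact: big_ord0.
under eq_bigr do rewrite exchange_big.
rewrite exchange_big /=.
have H (a0 : 'I_n.+1) : \sum_(s : {ffun 'I_n.+1 -> bool}) \sum_(sg : {perm 'I_n.+1}) Tw (s, sg) a0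
     = 'X * dB R n.
  rewrite /Tw /=.
  transitivity (\sum_(s : {ffun 'I_n.+1 -> bool} | s a0 == false)
       \sum_(sg : {perm 'I_n.+1} | sg a0 == a0)
       (if Cw (s, sg) a0 then 'X^((excB (s, sg)).+1) else 0 : {poly R})).
    rewrite [RHS]big_mkcond; apply: eq_bigr => s _.
    case: (boolP (s a0)) => hs /=.
      by rewrite big1 // => sg _.
    rewrite [RHS]big_mkcond; apply: eq_bigr => sg _.
    by case: (sg a0 == a0).
  rewrite sum_ffun_fix dB_sum mulr_sumr; apply: eq_bigr => s0 _.
  rewrite sum_perm_fix mulr_sumr; apply: eq_bigr => sg0 _.
  rewrite C_lift exc_lift_all /Aw; case: derangementB => //.
    by rewrite exprS.
  by rewrite mulr0.
rewrite (eq_bigr _ (fun a0 _ => H a0)) sumr_const card_ord.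
rewrite -mul_polyC polyC_natr; ring.
Qed.

Lemma dB_rec n :
  dB R n.+1 = ((2 * n).+1%:R *: 'X) * dB R n + (2%:R *: ('X * (1 - 'X))) * (dB R n)^`()
     + ((2 * n)%:R *: 'X) * (if n is m.+1 then dB R m else 0).
Proof.
rewrite dB_sum sum_ffun_split.
under eq_bigr => b _ do under eq_bigr => s _ do rewrite sum_perm_split exchange_big.
rewrite exchange_big /=.
under eq_bigr => s _ do rewrite exchange_big.
rewrite (eq_bigr (fun s => \sum_(sg : {perm 'I_n}) ('X * Aw (s, sg) +
   (\sum_(a0 < n) (if derangementB (s, sg) then Ew (s, sg) a0 else 0) +
          \sum_(a0 < n) Tw (s, sg) a0) *+ 2))); last first.
  by move=> s _; apply: eq_bigr => sg _; rewrite inner.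
have Hs : forall s : {ffun 'I_n -> bool}, \sum_(sg : {perm 'I_n}) ('X * Aw (s, sg) +
   (\sum_(a0 < n) (if derangementB (s, sg) then Ew (s, sg) a0 else 0) +
          \sum_(a0 < n) Tw (s, sg) a0) *+ 2) =
   'X * \sum_(sg : {perm 'I_n}) Aw (s, sg) +
   (\sum_(sg : {perm 'I_n}) \sum_(a0 < n) (if derangementB (s, sg) then Ew (s, sg) a0 else 0) +
    \sum_(sg : {perm 'I_n}) \sum_(a0 < n) Tw (s, sg) a0) *+ 2.
  by move=> s; rewrite big_split /= sumrMnl big_split /= mulr_sumr.
rewrite (eq_bigr _ (fun s _ => Hs s)).
rewrite big_split /= sumrMnl big_split /= -mulr_sumr -dB_sum Msum Tsum.
rewrite -!mul_polyC !polyC_natr; set D := match n with 0%N => _ | _.+1 => _ end; ring.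
Qed.

End Rec.


Section Pal.
Variable R : realFieldType.

Lemma poly_eq0_nz (q : {poly R}) : (forall x, x != 0 -> q.[x] = 0) -> q = 0.
Proof.
move=> H; apply/eqP; apply: contraT => nz.
have := max_poly_roots (rs := [seq (i.+1)%:R | i <- iota 0 (size q)]) nz.
rewrite size_map size_iota ltnn; apply.
  apply/allP => x /mapP [i _ ->]; apply/eqP; apply: H.
  by rewrite pnatr_eq0.
by rewrite map_inj_uniq ?iota_uniq // => i j /eqP; rewrite eqr_nat eqSS => /eqP.
Qed.

Definition cpal (k : nat) (p : {poly R}) :=
  forall i, p`_i = if (i <= k)%N then p`_(k - i) else 0.

Lemma pal_cpal k p : palindromic k p -> cpal k p.
Proof.
move=> hp.
pose N := (size p + k)%N.
pose Q := 'X^(N - k) * p - \poly_(i < N.+1) p`_(N - i).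
have HQ : Q = 0.
  apply: poly_eq0_nz => x x0.
  rewrite /Q !hornerE horner_poly hp // (horner_coef_wide _ (n := N.+1)); last by rewrite /N; lia.
  rewrite mulrA -exprD subnK; last by rewrite /N; lia.
  rewrite mulr_sumr (reindex_inj rev_ord_inj) /=; apply/eqP; rewrite subr_eq0; apply/eqP.
  apply: eq_bigr => i _; rewrite subSS.
  have hi : N = (i + (N - i))%N by have := ltn_ord i; lia.
  have H1 : x ^+ (N - i) * x^-1 ^+ (N - i) = 1 by rewrite -exprMn mulfV // expr1n.
  rewrite {1}hi exprD -[RHS]mulr1 -H1; ring.
move=> i.
have cQ m : (if (m < N - k)%N then 0 else p`_(m - (N - k))) = (if (m < N.+1)%N then p`_(N - m) else 0).
  by apply/eqP; rewrite -subr_eq0; move: (congr1 (fun q : {poly R} => q`_m) HQ);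
     rewrite /Q coefB coefXnM coef_poly coef0 => ->.
case: leqP => hik.
  have := cQ (i + (N - k))%N.
  rewrite ifF; last by apply/negbTE; rewrite -leqNgt; lia.
  rewrite ifT; last by rewrite /N; lia.
  by rewrite addnK (_ : (N - (i + (N - k)))%N = (k - i)%N) //; rewrite /N; lia.
case: (leqP (size p) i) => hs; first by rewrite nth_default.
have := cQ (N - i)%N.
rewrite ifT; last by rewrite /N; lia.
rewrite ifT; last by rewrite /N; lia.
by rewrite subKn // /N; lia.
Qed.

Lemma cpal0 k : cpal k 0.
Proof. by move=> i; rewrite !coef0; case: ifP. Qed.

Lemma cpalD k p q : cpal k (p : {poly R}) -> cpal k (q : {poly R}) -> cpal k (p + q).
Proof. by move=> hp hq i; rewrite !coefD hp hq; case: ifP; rewrite ?addr0. Qed.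

Lemma cpalZ k c (p : {poly R}) : cpal k (p : {poly R}) -> cpal k (c *: p).
Proof. by move=> hp i; rewrite !coefZ hp; case: ifP; rewrite ?mulr0. Qed.

Lemma cpalN k p : cpal k (p : {poly R}) -> cpal k (- p).
Proof. by move=> hp; rewrite -scaleN1r; apply: cpalZ. Qed.

Lemma cpalB k p q : cpal k (p : {poly R}) -> cpal k (q : {poly R}) -> cpal k (p - q).
Proof. by move=> hp hq; apply: cpalD => //; apply: cpalN. Qed.

Lemma cpal_hi k p i : cpal k (p : {poly R}) -> (k < i)%N -> p`_i = 0.
Proof. by move=> hp hi; rewrite hp leqNgt hi. Qed.

Lemma cpal_sym k p i j : cpal k (p : {poly R}) -> (i + j = k)%N -> p`_i = p`_j.
Proof. by move=> hp hij; rewrite hp ifT; [congr (_`_ _); lia | lia]. Qed.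

Lemma cpalI k (p : {poly R}) : (forall i, (k < i)%N -> p`_i = 0) ->
  (forall i j, (i + j = k)%N -> p`_i = p`_j) -> cpal k p.
Proof.
move=> h1 h2 i; case: leqP => hi; last exact: h1.
by apply: h2; lia.
Qed.

Lemma cpalX k p : cpal k (p : {poly R}) -> cpal k.+2 ('X * p).
Proof.
move=> hp; apply: cpalI => [i hi|i j hij]; rewrite !coefXM.
  by case: eqP => // _; apply: (cpal_hi hp); lia.
case: eqP => [i0|/eqP i0]; case: eqP => [j0|/eqP j0] //.
- by rewrite (cpal_hi hp) //; lia.
- by rewrite (cpal_hi hp) //; lia.
- by apply: (cpal_sym hp); lia.
Qed.

Lemma cpal1X k p : cpal k (p : {poly R}) -> cpal k.+1 ((1 + 'X) * p).
Proof.
move=> hp; apply: cpalI => [i hi|i j hij]; rewrite mulrDl mul1r !coefD !coefXM.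
  rewrite (cpal_hi hp (i := i)); last lia.
  case: eqP => [|_]; rewrite ?addr0 // (cpal_hi hp (i := i.-1)) ?add0r //; case: i hi => [|i] hi //=; lia.
case: eqP => [i0|/eqP i0]; case: eqP => [j0|/eqP j0].
- lia.
- by rewrite addr0 (cpal_hi hp (i := j)); [rewrite add0r; apply: (cpal_sym hp); lia | lia].
- by rewrite addr0 (cpal_hi hp (i := i)); [rewrite add0r; apply: (cpal_sym hp); lia | lia].
- rewrite addrC; congr (_ + _); apply: (cpal_sym hp); lia.
Qed.

Definition Top k (p : {poly R}) := (k%:R *: 'X) * p + ('X * (1 - 'X)) * p^`().

Lemma coefTop k (p : {poly R}) i : (Top k p)`_i = if i is i'.+1 then
   k%:R * p`_i' + p`_i'.+1 *+ i'.+1 - p`_i' *+ i' else 0.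
Proof.
rewrite /Top mulrBr mulr1 -scalerAl coefD coefZ mulrBl coefB -mulrA !coefXM.
case: i => [|[|i]] /=; rewrite ?mulr0 ?subrr ?addr0 ?subr0 ?coef_deriv //; rewrite ?mulr0n ?subr0 //; by rewrite addrA.
Qed.

Lemma cpalT k p : cpal k (p : {poly R}) -> cpal k.+1 (Top k p).
Proof.
move=> hp; apply: cpalI => [i hi|i j hij]; rewrite !coefTop.
  case: i hi => [|i] hi //.
  rewrite (cpal_hi hp (i := i)); last lia.
  rewrite (cpal_hi hp (i := i.+1)); last lia.
  by rewrite mulr0 mul0rn addr0 mul0rn subr0.
case: i hij => [|i]; case: j => [|j] hij //.
- rewrite (cpal_hi hp (i := j.+1)); last lia.
  have -> : k = j by lia.
  by rewrite mul0rn addr0 mulr_natl subrr.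
- rewrite (cpal_hi hp (i := i.+1)); last lia.
  have -> : k = i by lia.
  by rewrite mul0rn addr0 mulr_natl subrr.
- have hk : k = (i + j).+1 by lia.
  rewrite (cpal_sym hp (i := i) (j := j.+1)); last lia.
  rewrite (cpal_sym hp (i := i.+1) (j := j)); last lia.
  rewrite (cpal_sym hp (i := j) (j := i.+1)); last lia.
  rewrite hk; ring.
Qed.

Lemma cpal_uniq k q : cpal k (q : {poly R}) -> cpal k.+1 q -> q = 0.
Proof.
move=> h1 h2.
have H d : (d <= k.+1)%N -> q`_(k.+1 - d) = 0.
  elim: d => [|d IH] hd; first by rewrite subn0 (cpal_hi h1).
  rewrite (cpal_sym h1 (i := (k.+1 - d.+1)%N) (j := d)); last lia.
  rewrite (cpal_sym h2 (i := d) (j := (k.+1 - d)%N)); last lia.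
  by apply: IH; lia.
apply/polyP => i; rewrite coef0.
case: (leqP i k.+1) => hi; last by rewrite (cpal_hi h1) //; lia.
by have := H (k.+1 - i)%N (leq_subr _ _); rewrite subKn.
Qed.

End Pal.


Unset Implicit Arguments. Set Strict Implicit.

Theorem proposition7p8 (R : realFieldType) (fp fm : nat -> {poly R})
  (hdec : forall n, dB R n = fp n + fm n)
  (hp : forall n, palindromic n (fp n))
  (hm : forall n, palindromic n.+1 (fm n)) :
  forall n : nat,
    fp n.+1 =
      ((2 * n)%:R *: 'X - 1) * fp n
      + (2%:R *: ('X * (1 - 'X))) * (fp n)^`()
      + ((2 * n)%:R *: 'X) * (if n is m.+1 then fp m else 0)
      + dB R n.
Proof.
move=> n.
have cP k : cpal k (fp k) by apply: pal_cpal.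
have cM k : cpal k.+1 (fm k) by apply: pal_cpal.
have cD : cpal n.+1 (((2 * n)%:R *: 'X) * (if n is m.+1 then fp m else 0)).
  rewrite -scalerAl; apply: cpalZ; case: n => [|m]; first by rewrite mulr0; apply: cpal0.
  exact: cpalX.
have cE : cpal n.+2 (((2 * n)%:R *: 'X) * (if n is m.+1 then fm m else 0)).
  rewrite -scalerAl; apply: cpalZ; case: n {cD} => [|m]; first by rewrite mulr0; apply: cpal0.
  exact: cpalX.
have hDD : (if n is m.+1 then dB R m else 0) =
    (if n is m.+1 then fp m else 0) + (if n is m.+1 then fm m else 0).
  by case: n {cD cE} => [|m]; rewrite ?addr0 ?hdec.
set g := (X in fp n.+1 = X).
set Dp := (if n is m.+1 then fp m else 0) in cD hDD g *.
set Dm := (if n is m.+1 then fm m else 0) in cE hDD *.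
have hg : g = 2%:R *: Top n (fp n) + ((2 * n)%:R *: 'X) * Dp + fm n.
  rewrite /g /Top hdec -!mul_polyC !polyC_natr; ring.
have cg : cpal n.+1 g.
  by rewrite hg; apply: cpalD; [apply: cpalD => //; apply: cpalZ; apply: cpalT | ].
have hd : dB R n.+1 - g =
    'X * fp n + 2%:R *: Top n.+1 (fm n) - (1 + 'X) * fm n + ((2 * n)%:R *: 'X) * Dm.
  rewrite dB_rec hDD /g /Top !hdec derivD -!mul_polyC !polyC_natr; ring.
have cd : cpal n.+2 (dB R n.+1 - g).
  rewrite hd; apply: cpalD => //; apply: cpalB; last exact: cpal1X.
  by apply: cpalD; [apply: cpalX | apply: cpalZ; apply: cpalT].
apply/eqP; rewrite -subr_eq0; apply/eqP; apply: (cpal_uniq (k := n.+1)).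
  exact: cpalB.
have -> : fp n.+1 - g = (dB R n.+1 - g) - fm n.+1 by rewrite hdec; ring.
exact: cpalB.
Qed.
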